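(* Fix integers $K\ge1$, $m_0\ge1$, a $p\times p$ matrix $G$, a threshold $\delta>0$, and $\epsilon>0$. Suppose the graph $\mathcal G^{*,\delta}$ is $K$-sparse, and that $\mathrm{sgn}(|\beta_1|),\dots,\mathrm{sgn}(|\beta_p|)$ are i.i.d. Bernoulli$(\epsilon)$. Then, except on an event of probability at most $p(e\epsilon K)^{m_0+1}$, $m_0^*(S(\beta),G,\delta)\le m_0$.
   Context: $\Omega^{*,\delta}(i,j)=G(i,j)1\{|G(i,j)|\ge\delta\}$; $\mathcal G^{*,\delta}$ is the graph on $\{1,\dots,p\}$ with an edge between $i\ne j$ iff $\Omega^{*,\delta}(i,j)\ne0$. A graph is $K$-sparse if its maximum degree is at most $K$. $S(\beta)=\{j:\beta_j\ne0\}$; $\mathcal G^{*,\delta}_S$ is the subgraph of $\mathcal G^{*,\delta}$ induced by $S(\beta)$, and $m_0^*(S(\beta),G,\delta)$ is the maximum number of nodes in a connected component of $\mathcal G^{*,\delta}_S$. *)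

(* Defs.v *)
From HB Require Import structures.
From mathcomp Require Import all_boot all_order all_algebra.
From mathcomp Require Import reals sequences exp.
Set Implicit Arguments. Unset Strict Implicit. Unset Printing Implicit Defensive.
Import Order.TTheory GRing.Theory Num.Theory.
Local Open Scope ring_scope.

Section Defs.
Variable R : realType.

Definition Omega_delta (p : nat) (G : 'M[R]_p) (delta : R) : 'M[R]_p :=
  \matrix_(i, j) (if delta <= `|G i j| then G i j else 0).

Definition gadj (p : nat) (G : 'M[R]_p) (delta : R) : rel 'I_p :=
  fun i j => (i != j) &&
    ((Omega_delta G delta i j != 0) || (Omega_delta G delta j i != 0)).

Definition K_sparse (p : nat) (G : 'M[R]_p) (delta : R) (K : nat) : Prop :=
  forall i : 'I_p, (#|[set j | gadj G delta i j]| <= K)%N.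

Definition supp (p : nat) (beta : 'I_p -> R) : {set 'I_p} :=
  [set j | beta j != 0].

Definition gadj_on (p : nat) (S : {set 'I_p}) (G : 'M[R]_p) (delta : R)
  : rel 'I_p :=
  fun i j => [&& i \in S, j \in S & gadj G delta i j].

(* m_0^*(S,G,delta): maximum number of nodes in a connected component of the
   induced subgraph G^{*,delta}_S (0 if S is empty) *)
Definition m0star (p : nat) (S : {set 'I_p}) (G : 'M[R]_p) (delta : R) : nat :=
  \max_(x in S) #|[set y | connect (gadj_on S G delta) x y]|.

End Defs.

(* Main.v *)
Require Import Defs.
From HB Require Import structures.
From mathcomp Require Import all_boot all_order all_algebra.
From mathcomp Require Import reals sequences exp.
From mathcomp Require Import zify ring lra.
Import Order.TTheory GRing.Theory Num.Theory.
Local Open Scope ring_scope.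
Set Implicit Arguments. Unset Strict Implicit.

Lemma conn_closed (T : finType) (e : rel T) (Pr : pred T) :
  (forall a b, e a b -> Pr a -> Pr b) ->
  forall x y, connect e x y -> Pr x -> Pr y.
Proof.
move=> H x y /connectP[s ps ->]; elim: s x ps => //= b s IH a /andP[eab ps] Pa.
exact: IH ps (H _ _ eab Pa).
Qed.

Lemma path_exit (T : finType) (e : rel T) (A : pred T) x s :
  path e x s -> A x -> ~~ A (last x s) ->
  exists a b, [/\ A a, ~~ A b & e a b].
Proof.
elim: s x => [|b s IH] x /=; first by move=> _ ->.
case/andP=> exb ps Ax; case Ab: (A b).
- exact: IH.
- by move=> _; exists x, b; rewrite Ab.
Qed.

Lemma card_bigcup_le (I T : finType) (Pr : pred I) (F : I -> {set T}) :
  (#|\bigcup_(i | Pr i) F i| <= \sum_(i | Pr i) #|F i|)%N.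
Proof.
elim/big_rec2: _ => [|i n U _ le]; first by rewrite cards0.
by rewrite (leq_trans (leq_card_setU _ _).1) ?leq_add2l.
Qed.

Section Main.
Variables (R : realType) (p : nat) (G : 'M[R]_p) (delta : R).

Local Notation gadj := (gadj G delta).
Local Notation gon S := (gadj_on S G delta).

Lemma gadj_sym : symmetric gadj.
Proof.
move=> i j; rewrite /Defs.gadj eq_sym; congr (_ && _); exact: orbC.
Qed.

Lemma gon_sym S : symmetric (gon S).
Proof.
move=> i j; rewrite /gadj_on gadj_sym; by case: (i \in S); case: (j \in S).
Qed.

Definition rc (x : 'I_p) (T : {set 'I_p}) : bool :=
  (x \in T) && [forall y in T, connect (gon T) x y].

Definition bd (T : {set 'I_p}) : {set 'I_p} :=
  [set b | (b \notin T) && [exists a in T, gadj a b]].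

Definition wt (q : R) (S : {set 'I_p}) : R := q ^+ #|S| * (1 - q) ^+ (p - #|S|).

Lemma wt_ge0 q S : 0 <= q -> q <= 1 -> 0 <= wt q S.
Proof. by move=> q0 q1; rewrite /wt mulr_ge0 // exprn_ge0 // subr_ge0. Qed.

Lemma wsum (q : R) (A B : {set 'I_p}) : [disjoint A & B] ->
  \sum_(S : {set 'I_p} | (A \subset S) && [disjoint S & B]) wt q S
   = q ^+ #|A| * (1 - q) ^+ #|B|.
Proof.
move=> dAB.
pose F i : R := if i \in B then 0 else q.
pose H i : R := if i \in A then 0 else 1 - q.
have L : \prod_i (F i + H i) = q ^+ #|A| * (1 - q) ^+ #|B|.
  rewrite -!prodr_const (big_mkcond (fun i => i \in A)) (big_mkcond (fun i => i \in B)) -big_split.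
  apply: eq_bigr => i _; rewrite /F /H.
  case iA: (i \in A); case iB: (i \in B) => //=.
  - by move: (disjointFr dAB iA); rewrite iB.
  - by rewrite addr0 mulr1.
  - by rewrite add0r mul1r.
  - by rewrite addrC subrK mulr1.
rewrite -L bigA_distr big_mkcond /=; apply: eq_bigr => S _.
case: ifP => [/andP[sAS dSB]|hc].
  rewrite /wt; have -> : (p - #|S| = #|~: S|)%N by have h := cardsC S; rewrite card_ord in h; lia.
  rewrite -(prodr_const (fun i => i \in S)) -(prodr_const (fun i => i \in ~: S)).
  rewrite [RHS](bigID (fun i => i \in S)) /=; congr (_ * _).
    apply: eq_bigr => i iS; rewrite iS /F; by rewrite (disjointFr dSB iS).
  apply: eq_big => [i|i]; first by rewrite inE.
  rewrite inE => /negbTE iS; rewrite iS /H.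
  by case iA: (i \in A) => //; move/subsetP: sAS => /(_ i iA); rewrite iS.
apply/esym/eqP; rewrite prodf_seq_eq0; apply/hasP.
move/negbT: hc; rewrite negb_and => /orP[/subsetPn[i iA iS]|].
  by exists i; rewrite ?mem_index_enum //= (negbTE iS) /H iA.
rewrite -setI_eq0 => /set0Pn[i]; rewrite inE => /andP[iS iB].
by exists i; rewrite ?mem_index_enum //= iS /F iB.
Qed.


Lemma gon_sub (S T : {set 'I_p}) : S \subset T -> subrel (gon S) (connect (gon T)).
Proof.
move=> sST a b /and3P[aS bS ab]; apply: connect1.
by rewrite /gadj_on (subsetP sST _ aS) (subsetP sST _ bS).
Qed.

Lemma conn_in (S : {set 'I_p}) x y : connect (gon S) x y -> x \in S -> y \in S.
Proof.
apply: (conn_closed (Pr := mem S)) => a b /and3P[_ bS _] _; exact: bS.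
Qed.

Lemma grow (S : {set 'I_p}) x : x \in S -> forall k,
  (k < #|[set y | connect (gon S) x y]|)%N ->
  exists T : {set 'I_p}, [/\ T \subset [set y | connect (gon S) x y], rc x T & #|T| = k.+1].
Proof.
move=> xS; set C := [set y | _]; elim=> [|k IH] hk.
  exists [set x]; split; last by rewrite cards1.
  - by rewrite sub1set inE connect0.
  - rewrite /rc set11 /=; apply/forall_inP => y; rewrite inE => /eqP ->.
    exact: connect0.
have [T [TC rT cT]] := IH (ltnW hk).
have : ~~ (C \subset T).
  apply/negP => /subset_leq_card; rewrite cT; lia.
case/subsetPn => y yC yT.
move: yC; rewrite inE => /connectP[s ps ey].
case/andP: rT => xT allT.
have yl : ~~ (mem T) (last x s) by rewrite -ey.
have [a [b [aT bT eab]]] := path_exit (A := mem T) ps xT yl.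
have aC : a \in C by exact: subsetP TC a aT.
have bC : b \in C.
  by rewrite inE; apply: connect_trans (connect1 eab); move: aC; rewrite inE.
exists (b |: T); split.
- by rewrite subUset sub1set bC TC.
- rewrite /rc setU1r //=; apply/forall_inP => z; rewrite !inE => /orP[/eqP ->|zT].
    apply: (@connect_trans _ _ a).
      apply: (connect_sub (gon_sub (subsetUr [set b] T))).
      exact: (forall_inP allT).
    apply: connect1; case/and3P: eab => _ _ ab.
    by rewrite /gadj_on setU11 setU1r.
  apply: (connect_sub (gon_sub (subsetUr [set b] T))).
  exact: (forall_inP allT).
- by rewrite cardsU1 bT cT.
Qed.

Lemma uniq_sub (S T1 T2 : {set 'I_p}) x : rc x T1 -> rc x T2 -> T1 \subset S ->
  [disjoint S & bd T2] -> T1 \subset T2.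
Proof.
case/andP=> xT1 all1 /andP[xT2 _] sT1 dS; apply/subsetP => y yT1.
have := forall_inP all1 y yT1.
move/(conn_closed (Pr := mem T2)); apply; last exact: xT2.
move=> a b /and3P[aT1 bT1 ab] aT2; apply/negPn/negP => bT2.
have bS : b \in S by exact: subsetP sT1 b bT1.
have : b \in bd T2.
  rewrite inE; apply/andP; split; first exact: bT2.
  by apply/exists_inP; exists a.
move=> h; by move: (disjointFr dS bS); rewrite h.
Qed.

Lemma has_nbr x (T : {set 'I_p}) a : rc x T -> (2 <= #|T|)%N -> a \in T ->
  exists c, (c \in T) && gadj a c.
Proof.
case/andP=> xT allT c2 aT.
have : (0 < #|T :\ a|)%N by move: c2; rewrite (cardsD1 a T) aT; lia.
case/card_gt0P => y; rewrite !inE => /andP[ya yT].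
have : connect (gon T) a y.
  apply: (@connect_trans _ _ x).
    by rewrite (sym_connect_sym (@gon_sym T)); exact: (forall_inP allT).
  exact: (forall_inP allT).
case/connectP => [[|c s]] /=; first by move=> _ ey; rewrite ey eqxx in ya.
by case/andP=> /and3P[_ cT ac] _ _; exists c; rewrite cT.
Qed.

Lemma bd_card K x (T : {set 'I_p}) : K_sparse G delta K -> rc x T -> (2 <= #|T|)%N ->
  (#|bd T| <= (K - 1) * #|T|)%N.
Proof.
move=> Ks rT c2.
have sub : bd T \subset \bigcup_(a in T) ([set j | gadj a j] :\: T).
  apply/subsetP => b; rewrite inE => /andP[bT /exists_inP[a aT ab]].
  by apply/bigcupP; exists a => //; rewrite !inE bT.
apply: (leq_trans (subset_leq_card sub)); apply: (leq_trans (card_bigcup_le _ _)).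
rewrite mulnC -sum_nat_const; apply: leq_sum => a aT.
have [c /andP[cT ac]] := has_nbr rT c2 aT.
rewrite cardsD; have := Ks a.
have : (0 < #|[set j | gadj a j] :&: T|)%N.
  by apply/card_gt0P; exists c; rewrite !inE ac cT.
move=> h1 h2; apply: (leq_trans (leq_sub2r _ h2)); exact: leq_sub2l.
Qed.

Definition cnd (T S : {set 'I_p}) := (T \subset S) && [disjoint S & bd T].

Lemma disj_bd (T : {set 'I_p}) : [disjoint T & bd T].
Proof. by rewrite disjoints_subset; apply/subsetP => b bT; rewrite !inE bT. Qed.

Lemma wt_sum1 q : \sum_(S : {set 'I_p}) wt q S = 1.
Proof.
have d0 : [disjoint set0 & (set0 : {set 'I_p})] by rewrite disjoints_subset sub0set.
have := wsum q d0; rewrite cards0 !expr0 mulr1 => <-.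
apply: eq_bigl => S; by rewrite sub0set disjoints_subset setC0 subsetT.
Qed.

Lemma count_bound K x n (q : R) : K_sparse G delta K -> (2 <= n)%N ->
  0 <= q -> q <= 1 ->
  #|[set T : {set 'I_p} | rc x T && (#|T| == n)]|%:R
     * (q ^+ n * (1 - q) ^+ ((K - 1) * n)) <= 1.
Proof.
move=> Ks n2 q0 q1.
set Tx := [set T | _].
have q'0 : 0 <= 1 - q by rewrite subr_ge0.
have q'1 : 1 - q <= 1 by rewrite lerBlDr lerDl.
rewrite mulrC mulr_natr -sumr_const.
apply: (@le_trans _ _ (\sum_(T in Tx)
    \sum_(S : {set 'I_p} | cnd T S) wt q S)).
  apply: ler_sum => T; rewrite inE => /andP[rT /eqP cT].
  rewrite /cnd wsum ?disj_bd // cT; apply: ler_wpM2l; first exact: exprn_ge0.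
  apply: ler_wiXn2l => //; rewrite -cT; apply: bd_card Ks rT _; by rewrite cT.
under eq_bigr do rewrite big_mkcond.
rewrite exchange_big /= -(wt_sum1 q); apply: ler_sum => S _.
case: (pickP [pred T | (T \in Tx) && cnd T S]) => [T0 /andP[T0x c0] | none].
  rewrite (bigD1 T0) //= c0 big1 ?addr0 // => T /andP[Tx' neq].
  case: ifP => // cT; exfalso; move/negP: neq; apply; apply/eqP.
  move: Tx' T0x; rewrite !inE => /andP[r1 _] /andP[r2 _].
  case/andP: cT => s1 d1; case/andP: c0 => s2 d2.
  by apply/eqP; rewrite eqEsubset (uniq_sub r1 r2 s1 d2) (uniq_sub r2 r1 s2 d1).
rewrite big1 ?wt_ge0 // => T Tx'; by move: (none T); rewrite /= Tx' /= => ->.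
Qed.

End Main.

Lemma e_bound (R : realType) (K : nat) : (1 <= K)%N ->
  1 <= expR 1 * (1 - K%:R^-1) ^+ (K - 1) :> R.
Proof.
case: K => // k _; rewrite subn1 /=.
case: k => [|k].
  by rewrite expr0 mulr1; have := expR_ge1Dx (1:R); lra.
set k1 := k.+1.
have k0 : 0 < k1%:R :> R by rewrite ltr0n.
have h1 : 1 + k1%:R^-1 <= expR (k1%:R^-1) :> R := expR_ge1Dx _.
have h2 : (1 + k1%:R^-1) ^+ k1 <= expR 1 :> R.
  have -> : expR 1 = expR (k1%:R^-1) ^+ k1 :> R.
    by rewrite -expRM_natl mulfV // gt_eqF.
  apply: lerXn2r => //; rewrite nnegrE ?expR_ge0 //.
  by rewrite addr_ge0 // invr_ge0 ltW.
have id : (1 + k1%:R^-1) * (1 - k1.+1%:R^-1) = 1 :> R.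
  rewrite -addn1 natrD; field; apply/andP; split; rewrite gt_eqF //.
  by rewrite ltr_wpDr.
have hc : 0 <= (1 - k1.+1%:R^-1) ^+ k1 :> R.
  apply: exprn_ge0; rewrite subr_ge0 invf_le1 ?ler1n // ltr0n //.
apply: (le_trans _ (ler_wpM2r hc h2)).
by rewrite -exprMn id expr1n.
Qed.

Theorem lemma1 (R : realType) (p K m0 : nat) (G : 'M[R]_p) (delta eps : R)
  (Omega : finType) (P : Omega -> R) (beta : Omega -> 'I_p -> R) :
  (1 <= K)%N -> (1 <= m0)%N -> 0 < delta -> 0 < eps -> eps <= 1 ->
  (forall w, 0 <= P w) -> \sum_w P w = 1 ->
  (forall S : {set 'I_p},
      \sum_(w | supp (beta w) == S) P w = eps ^+ #|S| * (1 - eps) ^+ (p - #|S|)) ->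
  K_sparse G delta K ->
  \sum_(w | (m0 < m0star (supp (beta w)) G delta)%N) P w
    <= p%:R * (expR 1 * eps * K%:R) ^+ m0.+1.
Proof.
move=> K1 m01 dl0 e0 e1 P0 P1 law Ks.
set n := m0.+1.
set bad := fun S : {set 'I_p} => (m0 < m0star S G delta)%N.
set Tx := fun x : 'I_p => [set T : {set 'I_p} | rc G delta x T && (#|T| == n)].
have e0' : 0 <= eps by exact: ltW.
have A : \sum_(w | bad (supp (beta w))) P w
   = \sum_(S : {set 'I_p}) (if bad S then wt eps S else 0).
  rewrite (partition_big (fun w => supp (beta w)) predT) //=.
  apply: eq_bigr => S _; case bS: (bad S).
    rewrite /wt -law; apply: eq_bigl => w.
    by case: eqP => [->|]; rewrite ?bS ?andbF ?andbT.
  by rewrite big_pred0 // => w; case: eqP => [->|]; rewrite ?bS ?andbF ?andbT.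
rewrite A.
apply: (@le_trans _ _ (\sum_(S : {set 'I_p}) \sum_(x : 'I_p) \sum_(T in Tx x)
     (if T \subset S then wt eps S else 0))).
  apply: ler_sum => S _.
  have nn : forall x, 0 <= \sum_(T in Tx x) (if T \subset S then wt eps S else 0).
    by move=> x; apply: sumr_ge0 => T _; case: ifP => // _; exact: wt_ge0.
  case bS: (bad S); last by apply: sumr_ge0 => x _; exact: nn.
  case: (pickP [pred x | (x \in S) &&
     (m0 < #|[set y | connect (gadj_on S G delta) x y]|)%N]) => [x /andP[xS hx]|none].
    have [T [TC rT cT]] := grow xS hx.
    have TS : T \subset S.
      apply/subsetP => y /(subsetP TC); rewrite inE => cy; exact: conn_in cy xS.
    rewrite (bigD1 x) //= (bigD1 T) /=; last by rewrite inE rT cT eqxx.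
    rewrite TS -addrA lerDl; apply: addr_ge0.
      by apply: sumr_ge0 => T' _; case: ifP => // _; exact: wt_ge0.
    by apply: sumr_ge0 => y _; exact: nn.
  exfalso; move: bS; rewrite /bad /m0star ltnNge => /negP; apply.
  apply/bigmax_leqP => x xS; move: (none x); rewrite /= xS /= => /negbT.
  by rewrite -leqNgt.
rewrite exchange_big /=.
apply: (@le_trans _ _ (\sum_(x : 'I_p) #|Tx x|%:R * eps ^+ n)).
  apply: ler_sum => x _.
  rewrite exchange_big /= mulrC mulr_natr -sumr_const; apply: ler_sum => T.
  rewrite inE => /andP[_ /eqP cT].
  rewrite -big_mkcond /=.
  have d0 : [disjoint T & (set0 : {set 'I_p})] by rewrite disjoints_subset setC0 subsetT.
  have := wsum eps d0; rewrite cards0 expr0 mulr1 cT => <-.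
  have -> // : \sum_(S : {set 'I_p} | T \subset S) wt eps S =
     \sum_(S : {set 'I_p} | (T \subset S) && [disjoint S & set0]) wt eps S.
  by apply: eq_bigl => S; rewrite disjoints_subset setC0 subsetT andbT.
set q : R := K%:R^-1.
have K0 : 0 < K%:R :> R by rewrite ltr0n.
have q0 : 0 <= q by rewrite invr_ge0 ltW.
have q1 : q <= 1 by rewrite invf_le1 // ler1n.
have Kq : K%:R * q = 1 by rewrite mulfV // gt_eqF.
rewrite -[X in _ <= X]mulr1.
apply: (@le_trans _ _ (\sum_(x : 'I_p) (expR 1 * K%:R) ^+ n * eps ^+ n)).
  apply: ler_sum => x _; apply: ler_wpM2r; first exact: exprn_ge0.
  have cb := count_bound x Ks (m01 : (2 <= n)%N) q0 q1.
  have c1 : 1 <= (expR 1 * K%:R) ^+ n * (q ^+ n * (1 - q) ^+ ((K - 1) * n)).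
    rewrite mulrA -(exprMn n (expR 1 * K%:R) q) exprM -(exprMn n) -[expR 1 * K%:R * q]mulrA Kq mulr1.
    exact: exprn_ege1 (e_bound R K1).
  move: cb c1; set N := (#|_|)%:R; set c' := q ^+ n * _; set E := _ ^+ n.
  move=> cb c1.
  have E0 : 0 <= E by apply: exprn_ge0; apply: mulr_ge0 (expR_ge0 1) (ltW K0).
  have N0 : 0 <= N by exact: ler0n.
  apply: (@le_trans _ _ (N * (E * c'))).
    by rewrite -[X in X <= _]mulr1; apply: ler_wpM2l.
  rewrite mulrCA -[X in _ <= X]mulr1; exact: ler_wpM2l.
rewrite sumr_const card_ord -mulr_natl mulr1 -exprMn.
by rewrite [expR 1 * eps * _]mulrAC mulr1 mulr_natl.
Qed.
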